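(* For all $\lambda\in(0,1)\setminus\{\frac12\}$, all $x\in\mathbb{R}\setminus\mathbb{Z}$ and all integers $m\ge2$, $H(\lambda,x,m)\neq0$.
   Context: The doubly infinite Lerch zeta function is $H(\lambda,x,m)=\sum_{n\in\mathbb{Z}}\dfrac{e^{2\pi i\lambda n}}{(n-x)^m}$ for $\lambda\in[0,1)$, $x\in\mathbb{C}\setminus\mathbb{Z}$, $m>1$. *)

(* Defs.v *)
From Stdlib Require Import Reals ZArith.
From Coquelicot Require Import Coquelicot.
Open Scope R_scope.

Definition cexpi (t : R) : C := (cos t, sin t).

Definition lerch_term (lam x : R) (m : nat) (n : Z) : C :=
  Cdiv (cexpi (2 * PI * lam * IZR n)) (RtoC ((IZR n - x) ^ m)).

Fixpoint lerch_psum (lam x : R) (m : nat) (N : nat) : C :=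
  match N with
  | O => lerch_term lam x m 0%Z
  | S k => Cplus (Cplus (lerch_psum lam x m k) (lerch_term lam x m (Z.of_nat (S k))))
                 (lerch_term lam x m (- Z.of_nat (S k))%Z)
  end.

(** [is_H lam x m L] : the doubly infinite series
    H(lam,x,m) = sum_{n in Z} e^{2 pi i lam n}/(n-x)^m converges to L
    (as the limit of its symmetric partial sums; for m >= 2 the series is
    absolutely convergent, so this is the value of H). *)
Definition is_H (lam x : R) (m : nat) (L : C) : Prop :=
  filterlim (lerch_psum lam x m) eventually (locally L).

(* Main.v *)
Require Import Defs.
From Stdlib Require Import Reals ZArith.
From Coquelicot Require Import Coquelicot.
From Stdlib Require Import Lra Lia.
Open Scope R_scope.

Fixpoint psR (g : Z -> R) (N : nat) : R :=
  match N with
  | O => g 0%Z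
  | S k => psR g k + g (Z.of_nat (S k)) + g (- Z.of_nat (S k))%Z
  end.

Definition Summable (g : Z -> R) : Prop :=
  ex_series (fun n => g (Z.of_nat n)) /\ ex_series (fun n => g (- Z.of_nat (S n))%Z).

Definition Sval (g : Z -> R) : R :=
  Series (fun n => g (Z.of_nat n)) + Series (fun n => g (- Z.of_nat (S n))%Z).

Lemma Summable_ext g h : (forall j, g j = h j) -> Summable g -> Summable h.
Proof.
  intros E [H1 H2]; split; [eapply ex_series_ext; [|exact H1] | eapply ex_series_ext; [|exact H2]]; intros; apply E.
Qed.

Lemma Sval_ext g h : (forall j, g j = h j) -> Sval g = Sval h.
Proof.
  intros E; unfold Sval; f_equal; apply Series_ext; intros; apply E.
Qed.

Lemma psR_split g N :
  psR g (S N) = sum_n (fun n => g (Z.of_nat n)) (S N) + sum_n (fun n => g (- Z.of_nat (S n))%Z) N.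
Proof.
  induction N.
  - simpl. rewrite !sum_Sn, !sum_O. unfold plus; simpl. reflexivity.
  - change (psR g (S (S N))) with (psR g (S N) + g (Z.of_nat (S (S N))) + g (- Z.of_nat (S (S N)))%Z).
    rewrite IHN. rewrite (sum_Sn (fun n => g (Z.of_nat n)) (S N)), (sum_Sn (fun n => g (- Z.of_nat (S n))%Z) N). unfold plus; simpl. lra.
Qed.

Lemma series_lim (a : nat -> R) : ex_series a -> is_lim_seq (sum_n a) (Series a).
Proof.
  intros H. apply Series_correct in H. exact H.
Qed.

Lemma psR_lim g : Summable g -> is_lim_seq (psR g) (Sval g).
Proof.
  intros [H1 H2]. apply is_lim_seq_incr_1.
  eapply is_lim_seq_ext. { intros n. symmetry. apply psR_split. }
  apply is_lim_seq_plus'.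
  - apply (is_lim_seq_incr_1 (sum_n _)). now apply series_lim.
  - now apply series_lim.
Qed.

Lemma shift_p1 g : Summable g ->
  Summable (fun j => g (j + 1)%Z) /\ Sval (fun j => g (j + 1)%Z) = Sval g.
Proof.
  intros [H1 H2].
  assert (EA : forall n, g (Z.of_nat n + 1)%Z = g (Z.of_nat (S n))).
  { intros n; f_equal; lia. }
  set (D := fun n => g (- Z.of_nat n)%Z).
  assert (ED : forall n, g (- Z.of_nat (S n) + 1)%Z = D n).
  { intros n; unfold D; f_equal; lia. }
  assert (HA' : ex_series (fun n => g (Z.of_nat (S n)))) by (now apply (ex_series_incr_1 (fun n => g (Z.of_nat n)))).
  assert (HD : ex_series D).
  { apply ex_series_incr_1. eapply ex_series_ext; [|exact H2]. intros n; unfold D; reflexivity. }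
  split.
  - split.
    + eapply ex_series_ext; [|exact HA']. intros n; now rewrite EA.
    + eapply ex_series_ext; [|exact HD]. intros n; now rewrite ED.
  - unfold Sval.
    rewrite (Series_ext _ _ EA), (Series_ext _ _ ED).
    rewrite (Series_incr_1 _ H1), (Series_incr_1 _ HD).
    unfold D at 1. simpl. replace (- 0)%Z with 0%Z by reflexivity.
    rewrite (Series_ext (fun k => D (S k)) (fun n => g (- Z.of_nat (S n))%Z)) by (intros; reflexivity).
    cbn. ring.
Qed.

Lemma shift_m1 g : Summable g ->
  Summable (fun j => g (j - 1)%Z) /\ Sval (fun j => g (j - 1)%Z) = Sval g.
Proof.
  intros [H1 H2].
  set (A := fun n => g (Z.of_nat n - 1)%Z).
  assert (EA : forall n, A (S n) = g (Z.of_nat n)).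
  { intros n; unfold A; f_equal; lia. }
  assert (EB : forall n, g (- Z.of_nat (S n) - 1)%Z = g (- Z.of_nat (S (S n)))%Z).
  { intros n; f_equal; lia. }
  assert (HA : ex_series A).
  { apply ex_series_incr_1. eapply ex_series_ext; [|exact H1]. intros n; now rewrite EA. }
  assert (HB' : ex_series (fun n => g (- Z.of_nat (S (S n)))%Z)).
  { apply (ex_series_incr_1 (fun n => g (- Z.of_nat (S n))%Z)). exact H2. }
  split.
  - split.
    + exact HA.
    + eapply ex_series_ext; [|exact HB']. intros n; now rewrite EB.
  - unfold Sval. fold A.
    rewrite (Series_ext _ _ EB).
    rewrite (Series_incr_1 _ HA), (Series_incr_1 _ H2).
    rewrite (Series_ext _ _ EA).
    unfold A; simpl. ring.
Qed.

Lemma shift_gen (k : Z) : forall g, Summable g ->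
  Summable (fun j => g (j + k)%Z) /\ Sval (fun j => g (j + k)%Z) = Sval g.
Proof.
  induction k using Z.peano_ind; intros g Hg.
  - split.
    + eapply Summable_ext; [|exact Hg]. intros j; f_equal; lia.
    + apply Sval_ext. intros j; f_equal; lia.
  - destruct (IHk g Hg) as [S1 V1].
    destruct (shift_p1 _ S1) as [S2 V2].
    split.
    + eapply Summable_ext; [|exact S2]. intros j; simpl; f_equal; lia.
    + rewrite <- V1, <- V2. apply Sval_ext. intros j; f_equal; lia.
  - destruct (IHk g Hg) as [S1 V1].
    destruct (shift_m1 _ S1) as [S2 V2].
    split.
    + eapply Summable_ext; [|exact S2]. intros j; simpl; f_equal; lia.
    + rewrite <- V1, <- V2. apply Sval_ext. intros j; f_equal; lia.
Qed.

Lemma tele_series : is_series (fun n => / (INR n + 1) - / (INR n + 2)) 1.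
Proof.
  assert (E : forall N, sum_n (fun n => / (INR n + 1) - / (INR n + 2)) N = 1 - / (INR N + 2)).
  { induction N.
    - rewrite sum_O. simpl. field.
    - rewrite sum_Sn, IHN, S_INR. unfold plus; cbn -[INR]. field.
      split; pose proof (pos_INR N); lra. }
  assert (L : is_lim_seq (fun N => 1 - / (INR N + 2)) 1).
  { replace (Finite 1) with (Finite (1 - 0)) by (f_equal; ring).
    apply (is_lim_seq_minus' (fun _ => 1) (fun N => / (INR N + 2)) 1 0).
    - apply is_lim_seq_const.
    - replace (Finite 0) with (Rbar_inv p_infty) by reflexivity.
      apply is_lim_seq_inv; [|discriminate].
      eapply is_lim_seq_le_p_loc; [|apply is_lim_seq_INR].
      exists O; intros; lra. }
  unfold is_series.
  eapply filterlim_ext. { intros N; symmetry; apply E. }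
  exact L.
Qed.

Lemma pow_ge_sq (a : R) (m : nat) : 1 <= a -> (2 <= m)%nat -> a ^ 2 <= a ^ m.
Proof. intros; apply Rle_pow; auto. Qed.

Lemma inv_bound (c d : R) (n : nat) (m : nat) : 0 < c -> c * (INR n + 1) <= d -> (2 <= m)%nat ->
  / d ^ m <= (2 / c ^ m) * (/ (INR n + 1) - / (INR n + 2)).
Proof.
  intros Hc Hd Hm.
  pose proof (pos_INR n) as Hn.
  assert (Hd0 : 0 < d) by (assert (0 < c * (INR n + 1)) by (apply Rmult_lt_0_compat; lra); lra).
  assert (H1 : (c * (INR n + 1)) ^ m <= d ^ m).
  { apply pow_incr; split; [apply Rmult_le_pos; lra | lra]. }
  rewrite Rpow_mult_distr in H1.
  assert (H2 : (INR n + 1) ^ 2 <= (INR n + 1) ^ m) by (apply pow_ge_sq; [lra|exact Hm]).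
  assert (Hcm : 0 < c ^ m) by (apply pow_lt; lra).
  assert (H3 : c ^ m * (INR n + 1) ^ 2 <= d ^ m).
  { eapply Rle_trans; [|exact H1]. apply Rmult_le_compat_l; lra. }
  assert (E : / (INR n + 1) - / (INR n + 2) = / ((INR n + 1) * (INR n + 2))) by (field; lra).
  rewrite E.
  apply Rle_trans with (/ (c ^ m * (INR n + 1) ^ 2)).
  - apply Rinv_le_contravar; [|exact H3]. apply Rmult_lt_0_compat; [lra| apply pow_lt; lra].
  - unfold Rdiv. rewrite Rinv_mult. rewrite Rinv_mult.
    replace ((INR n + 1) ^ 2) with ((INR n + 1) * (INR n + 1)) by ring.
    rewrite Rinv_mult.
    assert (0 < / c ^ m) by (apply Rinv_0_lt_compat; lra).
    assert (0 < / (INR n + 1)) by (apply Rinv_0_lt_compat; lra).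
    assert (/ (INR n + 1) <= 2 * / (INR n + 2)).
    { apply Rmult_le_reg_r with ((INR n + 1) * (INR n + 2)). nra.
      field_simplify; lra. }
    assert (0 < / (INR n + 2)) by (apply Rinv_0_lt_compat; lra).
    assert (0 <= (/ c ^ m * / (INR n + 1)) * (2 * / (INR n + 2) - / (INR n + 1))) by (apply Rmult_le_pos; [apply Rmult_le_pos; lra| lra]). nra.
Qed.

Lemma summ_bound (g : Z -> R) (y : R) (m : nat) : 0 < y < 1 -> (2 <= m)%nat ->
  (forall j, Rabs (g j) <= / Rabs (IZR j - y) ^ m) -> Summable g.
Proof.
  intros Hy Hm Hb.
  set (c := Rmin y (1 - y) / 2).
  assert (Hc : 0 < c) by (unfold c, Rmin; destruct Rle_dec; lra).
  assert (Hc1 : c <= y / 2 /\ c <= (1 - y) / 2) by (unfold c, Rmin; destruct Rle_dec; lra).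
  assert (HS : ex_series (fun n => (2 / c ^ m) * (/ (INR n + 1) - / (INR n + 2)))).
  { apply (ex_series_scal_l (V := R_NormedModule) (2 / c ^ m)). eexists; apply tele_series. }
  split.
  - apply (ex_series_le (V := R_CompleteNormedModule)) with (2 := HS).
    intros n. change (norm (g (Z.of_nat n))) with (Rabs (g (Z.of_nat n))).
    eapply Rle_trans; [apply Hb|].
    rewrite <- INR_IZR_INZ.
    apply inv_bound; auto.
    pose proof (pos_INR n).
    destruct n.
    + simpl. rewrite Rabs_left; lra.
    + rewrite S_INR in *. pose proof (pos_INR n). rewrite Rabs_right by lra. assert (c * (INR n + 1 + 1) <= (1 - y) / 2 * (INR n + 1 + 1)) by (apply Rmult_le_compat_r; lra). nra.
  - apply (ex_series_le (V := R_CompleteNormedModule)) with (2 := HS).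
    intros n. change (norm (g (- Z.of_nat (S n))%Z)) with (Rabs (g (- Z.of_nat (S n))%Z)).
    eapply Rle_trans; [apply Hb|].
    rewrite opp_IZR, <- INR_IZR_INZ, S_INR.
    apply inv_bound; auto.
    pose proof (pos_INR n).
    rewrite Rabs_left; nra.
Qed.

Lemma pow_lt_strict (a b : R) (m : nat) : 0 <= a < b -> (1 <= m)%nat -> a ^ m < b ^ m.
Proof.
  intros H Hm. induction m as [|m IH]; [lia|].
  destruct m.
  - simpl; lra.
  - assert (IH' : a ^ S m < b ^ S m) by (apply IH; lia).
    change (a * a ^ S m < b * b ^ S m).
    assert (0 <= a ^ S m) by (apply pow_le; lra).
    nra.
Qed.

Definition Aseq (y : R) (m : nat) (n : nat) : R :=
  / (INR n + 1 - y) ^ m + / (INR n + y) ^ m.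

Definition Bseq (y : R) (m : nat) (n : nat) : R := (INR n + / 2) * Aseq y m n.

Lemma Aseq_pos y m n : 0 < y < 1 -> 0 < Aseq y m n.
Proof.
  intros Hy. unfold Aseq. pose proof (pos_INR n).
  assert (0 < (INR n + 1 - y) ^ m) by (apply pow_lt; lra).
  assert (0 < (INR n + y) ^ m) by (apply pow_lt; lra).
  assert (0 < / (INR n + 1 - y) ^ m) by (apply Rinv_0_lt_compat; lra).
  assert (0 < / (INR n + y) ^ m) by (apply Rinv_0_lt_compat; lra).
  lra.
Qed.

Lemma Aseq_decr y m n : 0 < y < 1 -> (1 <= m)%nat -> Aseq y m (S n) < Aseq y m n.
Proof.
  intros Hy Hm. unfold Aseq. rewrite S_INR. pose proof (pos_INR n).
  assert (0 < (INR n + 1 - y) ^ m) by (apply pow_lt; lra).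
  assert (0 < (INR n + y) ^ m) by (apply pow_lt; lra).
  assert (/ (INR n + 1 + 1 - y) ^ m < / (INR n + 1 - y) ^ m).
  { apply Rinv_lt_contravar. apply Rmult_lt_0_compat; auto. apply pow_lt; lra.
    apply pow_lt_strict; auto; lra. }
  assert (/ (INR n + 1 + y) ^ m < / (INR n + y) ^ m).
  { apply Rinv_lt_contravar. apply Rmult_lt_0_compat; auto. apply pow_lt; lra.
    apply pow_lt_strict; auto; lra. }
  lra.
Qed.

Lemma key_ineq (t u : R) (m : nat) : 1/2 <= t -> 0 < u <= t + 1/2 -> (2 <= m)%nat ->
  (t + 1) / (u + 1) ^ m < t / u ^ m.
Proof.
  intros Ht Hu Hm.
  assert (P : (t + 1) * u ^ 2 < t * (u + 1) ^ 2) by nra.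
  replace m with (2 + (m - 2))%nat by lia.
  rewrite !pow_add.
  set (k := (m - 2)%nat).
  assert (Q : u ^ k <= (u + 1) ^ k) by (apply pow_incr; lra).
  assert (Q0 : 0 < u ^ k) by (apply pow_lt; lra).
  assert (Q1 : 0 < (u + 1) ^ k) by (apply pow_lt; lra).
  assert (Q2 : 0 < u ^ 2) by (apply pow_lt; lra).
  assert (Q3 : 0 < (u + 1) ^ 2) by (apply pow_lt; lra).
  assert (R1 : (t + 1) * (u ^ 2 * u ^ k) < t * ((u + 1) ^ 2 * (u + 1) ^ k)).
  { apply Rlt_le_trans with (t * (u + 1) ^ 2 * u ^ k).
    - rewrite <- Rmult_assoc. apply Rmult_lt_compat_r; auto.
    - rewrite Rmult_assoc. apply Rmult_le_compat_l; [lra|].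
      apply Rmult_le_compat_l; lra. }
  unfold Rdiv.
  apply Rmult_lt_reg_r with ((u ^ 2 * u ^ k) * ((u + 1) ^ 2 * (u + 1) ^ k)).
  { apply Rmult_lt_0_compat; apply Rmult_lt_0_compat; auto. }
  field_simplify; try (split; lra); try lra.
  all: try nra.
Qed.

Lemma Bseq_decr y m n : 0 < y < 1 -> (2 <= m)%nat -> Bseq y m (S n) < Bseq y m n.
Proof.
  intros Hy Hm. unfold Bseq, Aseq. rewrite S_INR. pose proof (pos_INR n).
  assert (K1 := key_ineq (INR n + /2) (INR n + 1 - y) m ltac:(lra) ltac:(lra) Hm).
  assert (K2 := key_ineq (INR n + /2) (INR n + y) m ltac:(lra) ltac:(lra) Hm).
  unfold Rdiv in K1, K2.
  replace (INR n + 1 + 1 - y) with (INR n + 1 - y + 1) by ring.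
  replace (INR n + 1 + y) with (INR n + y + 1) by ring.
  replace (INR n + 1 + / 2) with (INR n + / 2 + 1) by ring.
  lra.
Qed.

Lemma Bseq_pos y m n : 0 < y < 1 -> 0 < Bseq y m n.
Proof.
  intros Hy. unfold Bseq. pose proof (pos_INR n). pose proof (Aseq_pos y m n Hy).
  apply Rmult_lt_0_compat; lra.
Qed.

Lemma abel (c B : nat -> R) :
  (forall N, sum_f_R0 c N <= 0) -> (forall n, 0 <= B n) -> (forall n, B (S n) <= B n) ->
  forall N, sum_f_R0 (fun i => c i * B i) N <= c 0%nat * (B 0%nat - B 1%nat).
Proof.
  intros Hc HB Hd.
  set (X := fun N => sum_f_R0 (fun i => c i * B i) N - sum_f_R0 c N * B N).
  assert (HX : forall N, X (S N) <= c 0%nat * (B 0%nat - B 1%nat)).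
  { induction N.
    - unfold X; simpl. lra.
    - apply Rle_trans with (X (S N)); auto.
      unfold X. change (sum_f_R0 (fun i => c i * B i) (S (S N))) with
        (sum_f_R0 (fun i => c i * B i) (S N) + c (S (S N)) * B (S (S N))).
      change (sum_f_R0 c (S (S N))) with (sum_f_R0 c (S N) + c (S (S N))).
      specialize (Hc (S N)). specialize (Hd (S N)).
      nra. }
  intros N. destruct N.
  - simpl. specialize (Hc 0%nat). simpl in Hc. specialize (HB 1%nat). nra.
  - specialize (HX N). unfold X in HX. specialize (Hc (S N)). specialize (HB (S N)). nra.
Qed.

Lemma sin_sum (phi : R) (N : nat) : sin phi <> 0 ->
  sum_f_R0 (fun n => - sin ((2 * INR n + 1) * phi)) N = - (sin ((INR N + 1) * phi)) ^ 2 / sin phi.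
Proof.
  intros Hs. induction N.
  - simpl. field_simplify; auto. replace ((0 + 1) * phi) with phi by ring.
    replace ((2 * 0 + 1) * phi) with phi by ring. field. auto.
  - rewrite tech5. rewrite IHN. rewrite S_INR.
    replace ((2 * (INR N + 1) + 1) * phi) with (((INR N + 1) * phi + phi) + (INR N + 1) * phi) by ring.
    replace ((INR N + 1 + 1) * phi) with ((INR N + 1) * phi + phi) by ring.
    set (A := (INR N + 1) * phi).
    rewrite (sin_plus (A + phi) A), (sin_plus A phi), (cos_plus A phi).
    pose proof (sin2_cos2 A) as E1. pose proof (sin2_cos2 phi) as E2.
    unfold Rsqr in *.
    apply Rmult_eq_reg_r with (sin phi); auto.
    field_simplify; auto.
    nra.
Qed.

Lemma odd_bound y m phi : 0 < y < 1 -> (1 <= m)%nat -> 0 < sin phi ->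
  forall N, sum_f_R0 (fun n => - sin ((2 * INR n + 1) * phi) * Aseq y m n) N
            <= - sin phi * (Aseq y m 0 - Aseq y m 1).
Proof.
  intros Hy Hm Hs N.
  replace (- sin phi) with (- sin ((2 * INR 0 + 1) * phi)) by (simpl; f_equal; f_equal; ring).
  apply (abel (fun n => - sin ((2 * INR n + 1) * phi)) (Aseq y m)).
  - intros K. rewrite sin_sum by lra.
    assert (0 <= sin ((INR K + 1) * phi) ^ 2) by (apply pow2_ge_0).
    unfold Rdiv. assert (0 < / sin phi) by (apply Rinv_0_lt_compat; lra). nra.
  - intros n; left; apply Aseq_pos; auto.
  - intros n; left; apply Aseq_decr; auto.
Qed.

Lemma Bsum_bound y m phi : 0 < y < 1 -> (2 <= m)%nat -> 0 < sin phi ->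
  forall N, sum_f_R0 (fun n => - sin ((2 * INR n + 1) * phi) * Bseq y m n) N
            <= - sin phi * (Bseq y m 0 - Bseq y m 1).
Proof.
  intros Hy Hm Hs N.
  replace (- sin phi) with (- sin ((2 * INR 0 + 1) * phi)) by (simpl; f_equal; f_equal; ring).
  apply (abel (fun n => - sin ((2 * INR n + 1) * phi)) (Bseq y m)).
  - intros K. rewrite sin_sum by lra.
    assert (0 <= sin ((INR K + 1) * phi) ^ 2) by (apply pow2_ge_0).
    unfold Rdiv. assert (0 < / sin phi) by (apply Rinv_0_lt_compat; lra). nra.
  - intros n; left; apply Bseq_pos; auto.
  - intros n; left; apply Bseq_decr; auto.
Qed.

Definition Ef y m N phi := sum_f_R0 (fun n => cos ((2 * INR n + 1) * phi) * Aseq y m n) N.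
Definition Ef' y m N phi := sum_f_R0 (fun n => - (2 * INR n + 1) * sin ((2 * INR n + 1) * phi) * Aseq y m n) N.

Lemma Ef_deriv y m N phi : derivable_pt_lim (Ef y m N) phi (Ef' y m N phi).
Proof.
  induction N.
  - unfold Ef, Ef'; simpl. apply is_derive_Reals. auto_derive; auto. ring.
  - unfold Ef, Ef'. 
    apply (derivable_pt_lim_ext (fun p => Ef y m N p + cos ((2 * INR (S N) + 1) * p) * Aseq y m (S N))).
    { intros; unfold Ef; rewrite tech5; reflexivity. }
    rewrite tech5. apply derivable_pt_lim_plus; [exact IHN|].
    generalize (Aseq y m (S N)) (2 * INR (S N) + 1); intros a c.
    apply is_derive_Reals. auto_derive; auto. ring.
Qed.

Lemma Ef'_bound y m N xi : 0 < y < 1 -> (2 <= m)%nat -> 0 < sin xi ->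
  Ef' y m N xi <= - 2 * sin xi * (Bseq y m 0 - Bseq y m 1).
Proof.
  intros Hy Hm Hs.
  pose proof (Bsum_bound y m xi Hy Hm Hs N) as H.
  unfold Ef'.
  rewrite (sum_eq _ (fun n => (- sin ((2 * INR n + 1) * xi) * Bseq y m n) * 2)).
  - rewrite <- scal_sum. lra.
  - intros i _. unfold Bseq. field.
Qed.

Lemma Ef_half y m N : Ef y m N (PI / 2) = 0.
Proof.
  unfold Ef. induction N.
  - simpl. rewrite cos_eq_0_1. ring. exists 0%Z. simpl. field.
  - rewrite tech5, IHN. rewrite cos_eq_0_1. ring.
    exists (Z.of_nat (S N)). rewrite <- INR_IZR_INZ. field.
Qed.

Lemma even_bound y m phi : 0 < y < 1 -> (2 <= m)%nat -> 0 < phi < PI -> phi <> PI / 2 ->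
  exists kappa, 0 < kappa /\
   forall N, (phi < PI / 2 -> kappa <= Ef y m N phi) /\ (PI / 2 < phi -> Ef y m N phi <= - kappa).
Proof.
  intros Hy Hm Hp Hne.
  set (d := Bseq y m 0 - Bseq y m 1).
  assert (Hd : 0 < d) by (unfold d; pose proof (Bseq_decr y m 0 Hy Hm); lra).
  assert (Hsp : 0 < sin phi) by (apply sin_gt_0; lra).
  pose proof PI_RGT_0.
  exists (2 * sin phi * d * Rabs (PI / 2 - phi)).
  split.
  { apply Rmult_lt_0_compat. nra. apply Rabs_pos_lt. lra. }
  intros N. split; intros Hlt.
  - destruct (MVT_cor2 (Ef y m N) (Ef' y m N) phi (PI / 2) Hlt (fun c _ => Ef_deriv y m N c))
      as [xi [E Hxi]].
    rewrite Ef_half in E.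
    assert (sin phi <= sin xi) by (apply sin_incr_1; lra).
    assert (Hb := Ef'_bound y m N xi Hy Hm ltac:(lra)).
    rewrite Rabs_right by lra.
    assert (Ef' y m N xi * (PI / 2 - phi) <= - 2 * sin xi * d * (PI / 2 - phi)).
    { apply Rmult_le_compat_r; [lra|]. exact Hb. }
    assert (sin phi * d * (PI / 2 - phi) <= sin xi * d * (PI / 2 - phi)).
    { apply Rmult_le_compat_r; [lra|]. apply Rmult_le_compat_r; lra. }
    lra.
  - destruct (MVT_cor2 (Ef y m N) (Ef' y m N) (PI / 2) phi Hlt (fun c _ => Ef_deriv y m N c))
      as [xi [E Hxi]].
    rewrite Ef_half in E.
    assert (sin phi <= sin xi) by (apply sin_decr_1; lra).
    assert (Hb := Ef'_bound y m N xi Hy Hm ltac:(apply sin_gt_0; lra)).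
    rewrite Rabs_left by lra.
    assert (Ef' y m N xi * (phi - PI / 2) <= - 2 * sin xi * d * (phi - PI / 2)).
    { apply Rmult_le_compat_r; [lra|]. exact Hb. }
    assert (sin phi * d * (phi - PI / 2) <= sin xi * d * (phi - PI / 2)).
    { apply Rmult_le_compat_r; [lra|]. apply Rmult_le_compat_r; lra. }
    lra.
Qed.

Lemma C_lim (u1 u2 : nat -> R) (l1 l2 : R) :
  is_lim_seq u1 l1 -> is_lim_seq u2 l2 ->
  filterlim (fun n => ((u1 n, u2 n) : C)) eventually (locally ((l1, l2) : C)).
Proof.
  intros H1 H2 P [eps HP].
  apply is_lim_seq_spec in H1. apply is_lim_seq_spec in H2.
  destruct (H1 eps) as [N1 HN1]. destruct (H2 eps) as [N2 HN2].
  exists (max N1 N2). intros n Hn.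
  apply HP. split.
  - apply HN1. lia.
  - apply HN2. lia.
Qed.

Lemma term_fst lam x m n : IZR n - x <> 0 ->
  fst (lerch_term lam x m n) = cos (2 * PI * lam * IZR n) / (IZR n - x) ^ m.
Proof.
  intros H. unfold lerch_term, Cdiv, cexpi, RtoC, Cinv, Cmult; simpl.
  assert ((IZR n - x) ^ m <> 0) by (apply pow_nonzero; auto).
  field; auto.
Qed.

Lemma term_snd lam x m n : IZR n - x <> 0 ->
  snd (lerch_term lam x m n) = sin (2 * PI * lam * IZR n) / (IZR n - x) ^ m.
Proof.
  intros H. unfold lerch_term, Cdiv, cexpi, RtoC, Cinv, Cmult; simpl.
  assert ((IZR n - x) ^ m <> 0) by (apply pow_nonzero; auto).
  field; auto.
Qed.

Lemma psum_comp lam x m N :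
  lerch_psum lam x m N = (psR (fun n => fst (lerch_term lam x m n)) N,
                          psR (fun n => snd (lerch_term lam x m n)) N).
Proof.
  induction N.
  - apply surjective_pairing.
  - change (lerch_psum lam x m (S N)) with (Cplus (Cplus (lerch_psum lam x m N) (lerch_term lam x m (Z.of_nat (S N)))) (lerch_term lam x m (- Z.of_nat (S N)))).
    rewrite IHN. reflexivity.
Qed.

Lemma summ_from (g : Z -> R) (k : Z) (y : R) (m : nat) : 0 < y < 1 -> (2 <= m)%nat ->
  (forall j, Rabs (g (j + k)%Z) <= / Rabs (IZR j - y) ^ m) ->
  Summable g /\ Sval g = Sval (fun j => g (j + k)%Z).
Proof.
  intros Hy Hm Hb.
  pose proof (summ_bound (fun j => g (j + k)%Z) y m Hy Hm Hb) as Hs.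
  destruct (shift_gen (- k) _ Hs) as [S1 V1].
  split.
  - eapply Summable_ext; [|exact S1]. intros j; simpl; f_equal; lia.
  - rewrite <- V1. apply Sval_ext. intros j; simpl; f_equal; lia.
Qed.

Lemma Sval_pairs h : Summable h ->
  is_series (fun n => h (Z.of_nat (S n)) + h (- Z.of_nat n)%Z) (Sval h).
Proof.
  intros [H1 H2].
  set (D := fun n => h (- Z.of_nat n)%Z).
  assert (HD : ex_series D).
  { apply ex_series_incr_1. eapply ex_series_ext; [|exact H2]. intros n; unfold D; reflexivity. }
  assert (HA : ex_series (fun n => h (Z.of_nat (S n)))) by (now apply (ex_series_incr_1 (fun n => h (Z.of_nat n)))).
  replace (Sval h) with (Series (fun n => h (Z.of_nat (S n))) + Series D).
  - apply (is_series_plus (fun n => h (Z.of_nat (S n))) D); apply Series_correct; auto.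
  - unfold Sval. rewrite (Series_incr_1 _ H1), (Series_incr_1 _ HD).
    unfold D. cbn. ring.
Qed.

Lemma psR_lin (f g : Z -> R) (a b : R) N :
  psR (fun n => a * f n + b * g n) N = a * psR f N + b * psR g N.
Proof.
  induction N; simpl; [ring|]. rewrite IHN. ring.
Qed.

Lemma abs_bound (s a : R) (m : nat) : Rabs s <= 1 -> a <> 0 -> Rabs (s / a ^ m) <= / Rabs a ^ m.
Proof.
  intros Hs Ha. unfold Rdiv. rewrite Rabs_mult, Rabs_inv, <- RPow_abs.
  assert (0 < Rabs a ^ m) by (apply pow_lt; apply Rabs_pos_lt; auto).
  assert (0 < / Rabs a ^ m) by (apply Rinv_0_lt_compat; auto).
  pose proof (Rabs_pos s). nra.
Qed.

Lemma pow_neg (a : R) (m : nat) : (- a) ^ m = (-1) ^ m * a ^ m.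
Proof. replace (- a) with (-1 * a) by ring. apply Rpow_mult_distr. Qed.

Lemma lim_le_const (u : nat -> R) (l c : R) : is_lim_seq u l -> (forall n, u n <= c) -> l <= c.
Proof.
  intros H Hb. assert (Rbar_le l c) by (eapply is_lim_seq_le; [exact Hb | exact H | apply is_lim_seq_const]).
  exact H0.
Qed.

Lemma lim_ge_const (u : nat -> R) (l c : R) : is_lim_seq u l -> (forall n, c <= u n) -> c <= l.
Proof.
  intros H Hb. assert (Rbar_le c l) by (eapply is_lim_seq_le; [exact Hb | apply is_lim_seq_const | exact H]).
  exact H0.
Qed.

Lemma psR_ext (f g : Z -> R) N : (forall n, f n = g n) -> psR f N = psR g N.
Proof. intros E; induction N; simpl; rewrite ?IHN, ?E; auto. Qed.

Lemma lim_scal (u : nat -> R) (a l : R) : is_lim_seq u l -> is_lim_seq (fun n => a * u n) (a * l).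
Proof. intros H. apply (is_lim_seq_scal_l u a l H). Qed.

Lemma cos_le1 t : Rabs (cos t) <= 1.
Proof. apply Rabs_le. apply COS_bound. Qed.
Lemma sin_le1 t : Rabs (sin t) <= 1.
Proof. apply Rabs_le. apply SIN_bound. Qed.

Lemma series_le (a : nat -> R) l c : is_series a l -> (forall N, sum_f_R0 a N <= c) -> l <= c.
Proof.
  intros H Hb. apply (lim_le_const (sum_n a)); [exact H|].
  intros n; rewrite sum_n_Reals; auto.
Qed.

Lemma series_ge (a : nat -> R) l c : is_series a l -> (forall N, c <= sum_f_R0 a N) -> c <= l.
Proof.
  intros H Hb. apply (lim_ge_const (sum_n a)); [exact H|].
  intros n; rewrite sum_n_Reals; auto.
Qed.

Theorem corollary4p8 (lam x : R) (m : nat) :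
  0 < lam < 1 -> lam <> / 2 ->
  (forall k : Z, x <> IZR k) ->
  (2 <= m)%nat ->
  exists L : C, is_H lam x m L /\ L <> RtoC 0.
Proof.
  intros Hl Hh Hx Hm.
  set (k := Int_part x). set (y := x - IZR k).
  assert (Hy : 0 < y < 1).
  { destruct (base_Int_part x) as [B1 B2]. pose proof (Hx k).
    unfold y. fold k in B1, B2. split; [|lra].
    destruct B1 as [B1|B1]; [lra|]. exfalso; auto. }
  assert (Hne : forall n, IZR n - x <> 0) by (intros n E; apply (Hx n); lra).
  assert (Hsh : forall j, IZR (j + k) - x = IZR j - y) by (intros j; rewrite plus_IZR; unfold y; ring).
  assert (Hne' : forall j, IZR j - y <> 0) by (intros j; rewrite <- Hsh; auto).
  set (gR := fun n => fst (lerch_term lam x m n)).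
  set (gI := fun n => snd (lerch_term lam x m n)).
  assert (ER : forall n, gR n = cos (2 * PI * lam * IZR n) / (IZR n - x) ^ m)
    by (intros; apply term_fst; auto).
  assert (EI : forall n, gI n = sin (2 * PI * lam * IZR n) / (IZR n - x) ^ m)
    by (intros; apply term_snd; auto).
  destruct (summ_from gR k y m Hy Hm) as [SR _].
  { intros j. rewrite ER, Hsh. apply abs_bound; auto. apply cos_le1. }
  destruct (summ_from gI k y m Hy Hm) as [SI _].
  { intros j. rewrite EI, Hsh. apply abs_bound; auto. apply sin_le1. }
  exists (Sval gR, Sval gI). split.
  { unfold is_H.
    apply (filterlim_ext (fun N => (psR gR N, psR gI N))).
    { intros N. rewrite psum_comp. reflexivity. }
    apply C_lim; apply psR_lim; auto. }
  intros HL.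
  assert (HZ : Sval gR = 0 /\ Sval gI = 0).
  { unfold RtoC in HL. injection HL. auto. }
  destruct HZ as [ZR ZI].
  set (phi := PI * lam).
  set (al := 2 * PI * lam * IZR k + PI * lam - PI / 2).
  pose proof PI_RGT_0 as Hpi.
  assert (Hphi : 0 < phi < PI) by (unfold phi; split; nra).
  assert (Hsphi : 0 < sin phi) by (apply sin_gt_0; lra).
  assert (Hang : forall j, 2 * PI * lam * IZR (j + k) - al = (2 * IZR j - 1) * phi + PI / 2)
    by (intros j; rewrite plus_IZR; unfold al, phi; ring).
  assert (Zlin : forall a b rho, (forall n, rho n = a * gR n + b * gI n) -> Summable rho -> Sval rho = 0).
  { intros a b rho Erho Srho.
    pose proof (psR_lim rho Srho) as L1.
    assert (L2 : is_lim_seq (psR rho) (a * Sval gR + b * Sval gI)).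
    { eapply is_lim_seq_ext.
      { intros N. rewrite <- psR_lin. symmetry. apply psR_ext. exact Erho. }
      apply is_lim_seq_plus'; apply lim_scal; apply psR_lim; auto. }
    apply is_lim_seq_unique in L1. apply is_lim_seq_unique in L2.
    rewrite L1 in L2. injection L2. intros E; rewrite E, ZR, ZI; ring. }
  assert (Hpow : forall n : nat, 0 < (INR n + 1 - y) ^ m /\ 0 < (INR n + y) ^ m).
  { intros n; pose proof (pos_INR n); split; apply pow_lt; lra. }
  destruct (Nat.Even_or_Odd m) as [[p Hp]|[p Hp]].
  -
    assert (Hm1 : (-1) ^ m = 1) by (rewrite Hp; apply pow_1_even).
    set (rho := fun n => cos al * gI n + (- sin al) * gR n).
    assert (Hr : forall j, rho (j + k)%Z = cos ((2 * IZR j - 1) * phi) / (IZR j - y) ^ m).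
    { intros j. unfold rho. rewrite ER, EI, Hsh.
      assert (E : cos al * sin (2 * PI * lam * IZR (j + k)) + - sin al * cos (2 * PI * lam * IZR (j + k))
                  = sin (2 * PI * lam * IZR (j + k) - al)) by (rewrite sin_minus; ring).
      rewrite Hang in E. rewrite sin_plus, sin_PI2, cos_PI2 in E.
      transitivity ((cos al * sin (2 * PI * lam * IZR (j + k)) + - sin al * cos (2 * PI * lam * IZR (j + k))) / (IZR j - y) ^ m).
      { field. apply pow_nonzero; auto. }
      rewrite E. f_equal; ring. }
    destruct (summ_from rho k y m Hy Hm) as [Srho Vrho].
    { intros j. rewrite Hr. apply abs_bound; auto. apply cos_le1. }
    assert (Z0 : Sval rho = 0) by (apply (Zlin (- sin al) (cos al)); auto; intros; unfold rho; ring).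
    set (h := fun j => rho (j + k)%Z).
    assert (Sh : Summable h).
    { apply (summ_bound h y m Hy Hm). intros j. unfold h. rewrite Hr. apply abs_bound; auto. apply cos_le1. }
    pose proof (Sval_pairs h Sh) as Hser.
    assert (Hp_eq : forall n, h (Z.of_nat (S n)) + h (- Z.of_nat n)%Z = cos ((2 * INR n + 1) * phi) * Aseq y m n).
    { intros n. unfold h. rewrite !Hr. rewrite opp_IZR, <- !INR_IZR_INZ, S_INR.
      replace (- INR n - y) with (- (INR n + y)) by ring. rewrite pow_neg, Hm1.
      replace ((2 * - INR n - 1) * phi) with (- ((2 * INR n + 1) * phi)) by ring.
      replace ((2 * (INR n + 1) - 1) * phi) with ((2 * INR n + 1) * phi) by ring.
      rewrite cos_neg. unfold Aseq. destruct (Hpow n). field; split; lra. }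
    assert (Hser' := is_series_ext _ _ _ Hp_eq Hser).
    assert (Hphi2 : phi <> PI / 2).
    { intros E. apply Hh. unfold phi in E. apply Rmult_eq_reg_l with PI; [|lra]. rewrite E. field. }
    destruct (even_bound y m phi Hy Hm Hphi Hphi2) as [kap [Hk HN]].
    unfold Sval in Vrho. fold h in Vrho.
    assert (Sval h = 0) by (unfold Sval, h; rewrite <- Vrho; exact Z0).
    destruct (Rlt_or_le phi (PI / 2)) as [Hlt|Hge].
    + assert (kap <= Sval h).
      { apply (series_ge _ _ _ Hser'). intros N. apply (proj1 (HN N) Hlt). }
      lra.
    + assert (Hlt : PI / 2 < phi) by lra.
      assert (Sval h <= - kap).
      { apply (series_le _ _ _ Hser'). intros N. apply (proj2 (HN N) Hlt). }
      lra.
  -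
    assert (Hm1 : (-1) ^ m = -1) by (rewrite Hp; replace (2 * p + 1)%nat with (S (2 * p)) by lia; apply pow_1_odd).
    set (rho := fun n => cos al * gR n + sin al * gI n).
    assert (Hr : forall j, rho (j + k)%Z = - sin ((2 * IZR j - 1) * phi) / (IZR j - y) ^ m).
    { intros j. unfold rho. rewrite ER, EI, Hsh.
      assert (E : cos al * cos (2 * PI * lam * IZR (j + k)) + sin al * sin (2 * PI * lam * IZR (j + k))
                  = cos (2 * PI * lam * IZR (j + k) - al)) by (rewrite cos_minus; ring).
      rewrite Hang in E. rewrite cos_plus, sin_PI2, cos_PI2 in E.
      transitivity ((cos al * cos (2 * PI * lam * IZR (j + k)) + sin al * sin (2 * PI * lam * IZR (j + k))) / (IZR j - y) ^ m).
      { field. apply pow_nonzero; auto. }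
      rewrite E. f_equal; ring. }
    destruct (summ_from rho k y m Hy Hm) as [Srho Vrho].
    { intros j. rewrite Hr. apply abs_bound; auto. rewrite Rabs_Ropp. apply sin_le1. }
    assert (Z0 : Sval rho = 0) by (apply (Zlin (cos al) (sin al)); auto).
    set (h := fun j => rho (j + k)%Z).
    assert (Sh : Summable h).
    { apply (summ_bound h y m Hy Hm). intros j. unfold h. rewrite Hr. apply abs_bound; auto. rewrite Rabs_Ropp. apply sin_le1. }
    pose proof (Sval_pairs h Sh) as Hser.
    assert (Hp_eq : forall n, h (Z.of_nat (S n)) + h (- Z.of_nat n)%Z = - sin ((2 * INR n + 1) * phi) * Aseq y m n).
    { intros n. unfold h. rewrite !Hr. rewrite opp_IZR, <- !INR_IZR_INZ, S_INR.
      replace (- INR n - y) with (- (INR n + y)) by ring. rewrite pow_neg, Hm1.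
      replace ((2 * - INR n - 1) * phi) with (- ((2 * INR n + 1) * phi)) by ring.
      replace ((2 * (INR n + 1) - 1) * phi) with ((2 * INR n + 1) * phi) by ring.
      rewrite sin_neg. unfold Aseq. destruct (Hpow n). field; split; lra. }
    assert (Hser' := is_series_ext _ _ _ Hp_eq Hser).
    unfold Sval in Vrho. fold h in Vrho.
    assert (Sval h = 0) by (unfold Sval, h; rewrite <- Vrho; exact Z0).
    assert (Sval h <= - sin phi * (Aseq y m 0 - Aseq y m 1)).
    { apply (series_le _ _ _ Hser'). intros N. apply odd_bound; auto. lia. }
    pose proof (Aseq_decr y m 0 Hy ltac:(lia)).
    nra.
Qed.
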